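(* Let $\mathcal{H}$ be a Hilbert space, $\Lambda$ an index set, $q=\{q_{\alpha\beta}\in\mathbb{T}:\alpha\ne\beta\in\Lambda\}$ with $q_{\alpha\beta}=q_{\beta\alpha}^{-1}$, and $\{V_\alpha:\alpha\in\Lambda\}$ a family of isometries on $\mathcal{H}$ with $V_\alpha V_\beta=q_{\alpha\beta}V_\beta V_\alpha$ for all $\alpha\ne\beta$. Then there exist a Hilbert space $\mathcal{K}\supseteq\mathcal{H}$ and unitaries $\{U_\alpha:\alpha\in\Lambda\}$ on $\mathcal{K}$ with $U_\alpha U_\beta=q_{\alpha\beta}U_\beta U_\alpha$ for all $\alpha\ne\beta$ such that $V_\alpha=U_\alpha|_{\mathcal{H}}$ for every $\alpha\in\Lambda$. *)

(* Defs.v *)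
From HB Require Import structures.
From mathcomp Require Import all_boot all_order all_algebra.
From mathcomp Require Import complex.
From mathcomp Require Import reals.
Set Implicit Arguments. Unset Strict Implicit. Unset Printing Implicit Defensive.
Import Order.TTheory GRing.Theory Num.Theory.
Local Open Scope ring_scope.
Local Open Scope complex_scope.

(* Cauchy / convergence are
   expressed with the squared norm <x,x>, which is equivalent. *)
Record HilbertSpace (R : realType) := {
  hcarrier :> lmodType R[i];
  hip : hcarrier -> hcarrier -> R[i];
  hip_linear : forall (a : R[i]) (x y z : hcarrier),
      hip (a *: x + y) z = a * hip x z + hip y z;
  hip_conj : forall x y : hcarrier, hip x y = (hip y x)^*;
  hip_ge0 : forall x : hcarrier, 0 <= hip x x;
  hip_eq0 : forall x : hcarrier, hip x x = 0 -> x = 0;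
  hcomplete : forall u : nat -> hcarrier,
      (forall e : R, 0 < e -> exists N : nat, forall m n : nat,
          (N <= m)%N -> (N <= n)%N -> `|hip (u m - u n) (u m - u n)| < e%:C) ->
      exists l : hcarrier, forall e : R, 0 < e -> exists N : nat, forall n : nat,
          (N <= n)%N -> `|hip (u n - l) (u n - l)| < e%:C
}.

Definition lin_map (R : realType) (H K : HilbertSpace R) (f : H -> K) : Prop :=
  forall (a : R[i]) (x y : H), f (a *: x + y) = a *: f x + f y.

Definition lin_isometry (R : realType) (H K : HilbertSpace R) (f : H -> K) : Prop :=
  lin_map f /\ forall x : H, hip (f x) (f x) = hip x x.

Definition isometry_on (R : realType) (H : HilbertSpace R) (V : H -> H) : Prop :=
  lin_isometry V.

Definition unitary_on (R : realType) (H : HilbertSpace R) (U : H -> H) : Prop :=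
  lin_isometry U /\ forall y : H, exists x : H, U x = y.

(* Main.v *)
Require Import Defs.
From HB Require Import structures.
From mathcomp Require Import all_boot all_order all_algebra.
From mathcomp Require Import complex reals boolp classical_sets functions.
From mathcomp Require Import ring lra.
Import Order.TTheory GRing.Theory Num.Theory.

Module P1.
Local Open Scope ring_scope.
Local Open Scope complex_scope.
Set Implicit Arguments. Unset Strict Implicit. Unset Printing Implicit Defensive.
Local Notation Re := (@complex.Re _).
Local Notation Im := (@complex.Im _).
Local Notation "x ^c" := (@conjc _ x) (at level 1, format "x ^c").

Section CplxFacts.
Variable R : realType.
Implicit Types a b : R[i].
Lemma complexP a b : Re a = Re b -> Im a = Im b -> a = b.
Proof. by case: a => ? ?; case: b => ? ? /= -> ->. Qed.
Lemma cReD a b : Re (a + b) = Re a + Re b. Proof. by case: a => ? ?; case: b => ? ?. Qed.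
Lemma cImD a b : Im (a + b) = Im a + Im b. Proof. by case: a => ? ?; case: b => ? ?. Qed.
Lemma cReN a : Re (- a) = - Re a. Proof. by case: a. Qed.
Lemma cImN a : Im (- a) = - Im a. Proof. by case: a. Qed.
Lemma cReB a b : Re (a - b) = Re a - Re b. Proof. by rewrite cReD cReN. Qed.
Lemma cImB a b : Im (a - b) = Im a - Im b. Proof. by rewrite cImD cImN. Qed.
Lemma cReM a b : Re (a * b) = Re a * Re b - Im a * Im b. Proof. by case: a => ? ?; case: b => ? ?. Qed.
Lemma cImM a b : Im (a * b) = Re a * Im b + Im a * Re b. Proof. by case: a => ? ?; case: b => ? ?. Qed.
Lemma cReJ a : Re (a^c) = Re a. Proof. by case: a. Qed.
Lemma cImJ a : Im (a^c) = - Im a. Proof. by case: a. Qed.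
Lemma cReR (r : R) : Re (r%:C) = r. Proof. by []. Qed.
Lemma cImR (r : R) : Im (r%:C) = 0. Proof. by []. Qed.
Lemma cRe0 : Re (0 : R[i]) = 0. Proof. by []. Qed.
Lemma cIm0 : Im (0 : R[i]) = 0. Proof. by []. Qed.
Lemma cRe1 : Re (1 : R[i]) = 1. Proof. by []. Qed.
Lemma cIm1 : Im (1 : R[i]) = 0. Proof. by []. Qed.
Lemma cRei : Re ('i : R[i]) = 0. Proof. by []. Qed.
Lemma cImi : Im ('i : R[i]) = 1. Proof. by []. Qed.
Definition cn a : R := Re a * Re a + Im a * Im a.
Lemma cn_ge0 a : 0 <= cn a. Proof. rewrite /cn; nra. Qed.
Lemma cn_eq0 a : cn a = 0 -> a = 0.
Proof. rewrite /cn => h; apply: complexP; rewrite ?cRe0 ?cIm0; nra. Qed.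
Lemma c2E : (2%:R : R[i]) = 2%:C.
Proof. by apply: complexP; rewrite -[2%:R]/(1 + 1 : R[i]) ?cReD ?cImD /= ?addr0. Qed.
Lemma c2_neq0 : (2%:R : R[i]) != 0.
Proof. by rewrite c2E; apply/eqP => /(congr1 (@complex.Re _)) /= /eqP; rewrite pnatr_eq0. Qed.
Lemma cn2 : cn (2%:R : R[i]) = 4.
Proof. by rewrite c2E /cn /=; ring. Qed.
Lemma cnR (r : R) : cn (r%:C) = r * r.
Proof. by rewrite /cn /=; ring. Qed.
End CplxFacts.

Section HilbFacts.
Variable R : realType.
Variable H : HilbertSpace R.
Implicit Types x y z : H.
Implicit Types a b : R[i].
Local Notation ip := (@hip R H).

Lemma hipDl x y z : ip (x + y) z = ip x z + ip y z.
Proof. by rewrite -[x in LHS]scale1r hip_linear mul1r. Qed.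
Lemma hip0l z : ip 0 z = 0.
Proof.
have := hipDl 0 0 z; rewrite addr0 -{1}[ip 0 z]addr0.
by move=> /addrI <-.
Qed.
Lemma hipZl a x z : ip (a *: x) z = a * ip x z.
Proof. by rewrite -[a *: x]addr0 hip_linear hip0l addr0. Qed.
Lemma hipNl x z : ip (- x) z = - ip x z.
Proof. by rewrite -scaleN1r hipZl mulN1r. Qed.
Lemma hipBl x y z : ip (x - y) z = ip x z - ip y z.
Proof. by rewrite hipDl hipNl. Qed.

Lemma conjcD a b : (a + b)^c = a^c + b^c.
Proof. by apply: complexP; rewrite ?(cReD, cImD, cReJ, cImJ) // opprD. Qed.
Lemma conjcM a b : (a * b)^c = a^c * b^c.
Proof. apply: complexP; rewrite ?(cReM, cImM, cReJ, cImJ); ring. Qed.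
Lemma conjcK' a : a^c^c = a.
Proof. by apply: complexP; rewrite ?(cReJ, cImJ) ?opprK. Qed.
Lemma conjcN a : (- a)^c = - a^c.
Proof. by apply: complexP; rewrite ?(cReN, cImN, cReJ, cImJ). Qed.
Lemma conjc0' : (0 : R[i])^c = 0.
Proof. by apply: complexP; rewrite ?(cReJ, cImJ) ?cRe0 ?cIm0 ?oppr0. Qed.

Lemma hip0r z : ip z 0 = 0.
Proof. by rewrite hip_conj hip0l conjc0'. Qed.
Lemma hipDr x y z : ip z (x + y) = ip z x + ip z y.
Proof. by rewrite hip_conj hipDl conjcD -!hip_conj. Qed.
Lemma hipZr a x z : ip z (a *: x) = a^c * ip z x.
Proof. by rewrite hip_conj hipZl conjcM -hip_conj. Qed.
Lemma hipNr x z : ip z (- x) = - ip z x.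
Proof. by rewrite hip_conj hipNl conjcN -hip_conj. Qed.
Lemma hipBr x y z : ip z (x - y) = ip z x - ip z y.
Proof. by rewrite hipDr hipNr. Qed.

Definition nrm x : R := Re (ip x x).
Lemma Im_hipxx x : Im (ip x x) = 0.
Proof. by have := hip_ge0 x; rewrite lecE => /andP[/eqP -> _]. Qed.
Lemma hip_real x : ip x x = (nrm x)%:C.
Proof. by apply: complexP => //=; rewrite Im_hipxx. Qed.
Lemma nrm_ge0 x : 0 <= nrm x.
Proof. by have := hip_ge0 x; rewrite lecE => /andP[_]. Qed.
Lemma nrm_eq0 x : nrm x = 0 -> x = 0.
Proof. by move=> h; apply: hip_eq0; rewrite hip_real h. Qed.
Lemma nrm0 : nrm 0 = 0.
Proof. by rewrite /nrm hip0l. Qed.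

Lemma Re_hip_sym x y : Re (ip y x) = Re (ip x y).
Proof. by rewrite hip_conj cReJ. Qed.
Lemma Im_hip_sym x y : Im (ip y x) = - Im (ip x y).
Proof. by rewrite hip_conj cImJ. Qed.

Lemma nrmD x y : nrm (x + y) = nrm x + nrm y + 2 * Re (ip x y).
Proof.
rewrite /nrm hipDl !hipDr !cReD Re_hip_sym; ring.
Qed.
Lemma nrmZ a x : nrm (a *: x) = cn a * nrm x.
Proof.
rewrite /nrm hipZl hipZr hip_real -/(nrm x) !(cReM, cImM, cReJ, cImJ) /cn /=; ring.
Qed.
Lemma nrmN x : nrm (- x) = nrm x.
Proof. by rewrite /nrm hipNl hipNr opprK. Qed.
Lemma nrmB x y : nrm (x - y) = nrm x + nrm y - 2 * Re (ip x y).
Proof. rewrite nrmD nrmN /nrm hipNr cReN; ring. Qed.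
Lemma nrmDZ a x y : nrm (x + a *: y) = nrm x + cn a * nrm y + 2 * Re (a^c * ip x y).
Proof. by rewrite nrmD nrmZ hipZr. Qed.

Lemma nrmDZ' a x y : nrm (x + a *: y) =
  nrm x + cn a * nrm y + 2 * (Re a * Re (ip x y) + Im a * Im (ip x y)).
Proof. rewrite nrmDZ cReM cReJ cImJ; congr (_ + 2 * _); ring. Qed.

Lemma cauchy_schwarz x y : cn (ip x y) <= nrm x * nrm y.
Proof.
have [y0|ny] := eqVneq (nrm y) 0.
  by rewrite (nrm_eq0 y0) hip0r nrm0 mulr0 /cn /= mulr0 addr0.
have ny0 : 0 < nrm y by rewrite lt_def ny nrm_ge0.
set c := ip x y; set n := nrm y.
have := nrm_ge0 (x + ((- (Re c / n)) +i* (- (Im c / n))) *: y).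
rewrite nrmDZ' /cn /= -/c -/n => h.
have e : nrm x * n - (Re c * Re c + Im c * Im c) = n *
  (nrm x + (- (Re c / n) * - (Re c / n) + - (Im c / n) * - (Im c / n)) * n +
   2 * (- (Re c / n) * Re c + - (Im c / n) * Im c)).
  by field; rewrite /n; lra.
rewrite /cn; suff : 0 <= nrm x * n - (Re c * Re c + Im c * Im c) by lra.
by rewrite e; apply: mulr_ge0 => //; lra.
Qed.

Lemma Re_le_cn a : Re a * Re a <= cn a.
Proof. rewrite /cn; nra. Qed.

Lemma nrm_add_le t x y : 0 < t -> nrm (x + y) <= (1 + t) * nrm x + (1 + t^-1) * nrm y.
Proof.
move=> t0; rewrite nrmD.
have cs := cauchy_schwarz x y.
have := Re_le_cn (ip x y).
set r := Re (ip x y) => hr.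
have nx := nrm_ge0 x; have ny := nrm_ge0 y.
suff : 2 * r <= t * nrm x + t^-1 * nrm y by lra.
have ti : 0 < t^-1 by rewrite invr_gt0.
have tt : t * t^-1 = 1 by rewrite mulfV // gt_eqF.
have h1 : (2 * r) ^+ 2 <= (t * nrm x + t^-1 * nrm y) ^+ 2.
  have e : (t * nrm x + t^-1 * nrm y) ^+ 2 = (t * nrm x - t^-1 * nrm y) ^+ 2 + 4 * (t * t^-1) * nrm x * nrm y by ring.
  rewrite e tt; have := sqr_ge0 (t * nrm x - t^-1 * nrm y).
  have -> : (2 * r) ^+ 2 = 4 * (r * r) by ring.
  lra.
have h2 : 0 <= t * nrm x + t^-1 * nrm y.
  by apply: addr_ge0; apply: mulr_ge0 => //; apply: ltW.
move: h1 h2; set X := 2 * r; set Y := t * nrm x + t^-1 * nrm y.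
rewrite !expr2 => h1 h2; nra.
Qed.
End HilbFacts.

End P1.
Import P1.

Module P2.
Local Open Scope ring_scope.
Local Open Scope complex_scope.
Set Implicit Arguments. Unset Strict Implicit. Unset Printing Implicit Defensive.
Local Notation Re := (@complex.Re _).
Local Notation Im := (@complex.Im _).
Local Notation "x ^c" := (@conjc _ x) (at level 1, format "x ^c").

Section Misc.
Variable R : realType.
Lemma small_inv (e : R) : 0 < e -> exists N : nat, (N.+1%:R)^-1 < e.
Proof.
move=> e0; exists (Num.Def.archi_bound e^-1).
have ei : 0 < e^-1 by rewrite invr_gt0.
have h := archi_boundP (ltW ei).
have h2 : (Num.Def.archi_bound e^-1)%:R < (Num.Def.archi_bound e^-1).+1%:R :> R by rewrite ltr_nat.
rewrite -[e in X in _ < X]invrK ltf_pV2 ?posrE ?invr_gt0 ?ltr0n //.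
exact: lt_trans h h2.
Qed.
Lemma inv_Sn_gt0 (n : nat) : 0 < (n.+1%:R : R)^-1.
Proof. by rewrite invr_gt0 ltr0n. Qed.
Lemma inv_Sn_mono (n m : nat) : (n <= m)%N -> (m.+1%:R : R)^-1 <= (n.+1%:R)^-1.
Proof. by move=> h; rewrite lef_pV2 ?posrE ?ltr0n // ler_nat ltnS. Qed.
Lemma le_eps (x M : R) : (forall e, 0 < e -> x <= M + e) -> x <= M.
Proof.
move=> h; rewrite leNgt; apply/negP => hlt.
have := h ((x - M) / 2); rewrite divr_gt0 ?subr_gt0 // => /(_ isT); lra.
Qed.
Lemma abs_real_lt (r e : R) : 0 <= r -> (`|r%:C| < e%:C) = (r < e).
Proof.
move=> r0; rewrite normc_def /= expr0n /= addr0 sqrtr_sqr ger0_norm //.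
by rewrite ltcR.
Qed.
End Misc.

Section Analysis.
Variable R : realType.
Variable H : HilbertSpace R.
Implicit Types x y z : H.
Local Notation ip := (@hip R H).
Local Notation nrm := (@nrm R H).

Definition conv (s : nat -> H) l :=
  forall e : R, 0 < e -> exists N, forall n, (N <= n)%N -> nrm (s n - l) < e.

Lemma complete' (u : nat -> H) :
  (forall e : R, 0 < e -> exists N, forall m n, (N <= m)%N -> (N <= n)%N -> nrm (u m - u n) < e) ->
  exists l, conv u l.
Proof.
move=> hc.
have [l hl] : exists l : H, forall e : R, 0 < e -> exists N : nat, forall n : nat,
          (N <= n)%N -> `|ip (u n - l) (u n - l)| < e%:C.
  apply: hcomplete => e e0; have [N hN] := hc e e0; exists N => m n hm hn.
  by rewrite hip_real abs_real_lt ?nrm_ge0 //; apply: hN.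
exists l => e e0; have [N hN] := hl e e0; exists N => n hn.
by have := hN n hn; rewrite hip_real abs_real_lt ?nrm_ge0.
Qed.

Lemma nrm_unif_cont (M e : R) : 0 < e -> exists2 d, 0 < d &
  forall a b : H, nrm a <= M -> nrm b < d -> nrm (a + b) < nrm a + e.
Proof.
move=> e0.
pose M' := `|M| + 1.
have M'0 : 0 < M' by rewrite /M'; have := normr_ge0 M; lra.
pose t := e / (2 * M').
have t0 : 0 < t by rewrite divr_gt0 // mulr_gt0.
pose d := e / (2 * (1 + t^-1)).
have ti : 0 < t^-1 by rewrite invr_gt0.
have d0 : 0 < d by rewrite divr_gt0 // mulr_gt0 //; lra.
exists d => // a b ha hb.
have := nrm_add_le a b t0.
have h1 : t * nrm a <= e / 2.
  have hM : nrm a <= M' by rewrite /M'; have := ler_norm M; lra.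
  have -> : e / 2 = t * M' by rewrite /t; field; lra.
  by rewrite ler_wpM2l // ltW.
have h2 : (1 + t^-1) * nrm b < e / 2.
  have -> : e / 2 = (1 + t^-1) * d by rewrite /d; field; lra.
  by rewrite ltr_pM2l //; lra.
lra.
Qed.

Lemma conv_le (s : nat -> H) l c (M : R) N0 :
  conv s l -> (forall n, (N0 <= n)%N -> nrm (s n - c) <= M) -> nrm (l - c) <= M.
Proof.
move=> hs hb; apply: le_eps => e e0.
have [d d0 hd] := nrm_unif_cont M e0.
have [N hN] := hs d d0.
have hn := hb (maxn N0 N) (leq_maxl _ _).
have hn2 := hN (maxn N0 N) (leq_maxr _ _).
have e1 : l - c = (s (maxn N0 N) - c) + - (s (maxn N0 N) - l) by rewrite opprB [RHS]addrC addrA subrK.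
rewrite e1; apply: ltW; apply: lt_le_trans (hd _ _ hn _) _; first by rewrite nrmN.
lra.
Qed.

Lemma conv_unique (s : nat -> H) l1 l2 : conv s l1 -> conv s l2 -> l1 = l2.
Proof.
move=> h1 h2; apply/eqP; rewrite -subr_eq0; apply/eqP; apply: nrm_eq0.
apply/le_anti; rewrite nrm_ge0 andbT; apply: le_eps => e e0; rewrite add0r.
have e4 : 0 < e / 4 by rewrite divr_gt0.
have [N1 hN1] := h1 _ e4; have [N2 hN2] := h2 _ e4.
have := nrm_add_le (l1 - s (maxn N1 N2)) (s (maxn N1 N2) - l2) ltr01.
rewrite addrA subrK invr1.
have := hN1 (maxn N1 N2) (leq_maxl _ _); rewrite -nrmN opprB.
have := hN2 (maxn N1 N2) (leq_maxr _ _).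
lra.
Qed.

Lemma hip_ext x y : (forall h, ip x h = ip y h) -> x = y.
Proof.
move=> e; apply/eqP; rewrite -subr_eq0; apply/eqP; apply: hip_eq0.
by rewrite hipBl e subrr.
Qed.
End Analysis.

End P2.
Import P2.

Module P3.
Local Open Scope ring_scope.
Local Open Scope complex_scope.
Set Implicit Arguments. Unset Strict Implicit. Unset Printing Implicit Defensive.
Local Notation Re := (@complex.Re _).
Local Notation Im := (@complex.Im _).
Local Notation "x ^c" := (@conjc _ x) (at level 1, format "x ^c").

Section Isom.
Variable R : realType.
Variable H : HilbertSpace R.
Implicit Types x y z : H.
Local Notation ip := (@hip R H).
Local Notation nrm := (@nrm R H).
Variable V : H -> H.
Hypothesis hV : lin_isometry V.

Lemma VD x y : V (x + y) = V x + V y.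
Proof. by have := (proj1 hV) 1 x y; rewrite !scale1r. Qed.
Lemma V0 : V 0 = 0.
Proof. by have := VD 0 0; rewrite addr0 -{1}[V 0]addr0 => /addrI <-. Qed.
Lemma VZ a x : V (a *: x) = a *: V x.
Proof. by have := (proj1 hV) a x 0; rewrite !addr0 V0 addr0. Qed.
Lemma VN x : V (- x) = - V x.
Proof. by rewrite -scaleN1r VZ scaleN1r. Qed.
Lemma VB x y : V (x - y) = V x - V y.
Proof. by rewrite VD VN. Qed.
Lemma nrmV x : nrm (V x) = nrm x.
Proof. by rewrite /P1.nrm (proj2 hV). Qed.

Lemma Re_hip_pol x y : Re (ip x y) = (nrm (x + y) - nrm x - nrm y) / 2.
Proof. rewrite nrmD; lra. Qed.
Lemma Im_hip_pol x y : Im (ip x y) = Re (ip x ((0 +i* 1) *: y)).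
Proof. by rewrite hipZr cReM cReJ cImJ /=; ring. Qed.
Lemma hipV x y : ip (V x) (V y) = ip x y.
Proof.
apply: complexP; first by rewrite !Re_hip_pol -VD !nrmV.
by rewrite !Im_hip_pol -VZ !Re_hip_pol -VD !nrmV.
Qed.

Section Proj.
Variable y : H.
Let E : set R := [set r | exists x, r = - nrm (y - V x)].
Let hsE : has_sup E.
Proof.
split; first by exists (- nrm (y - V 0)); exists 0.
exists 0 => r [x ->]; have := nrm_ge0 (y - V x); lra.
Qed.
Let d := - sup E.
Let d_le x : d <= nrm (y - V x).
Proof. have := sup_upper_bound hsE; move/(_ (- nrm (y - V x))) => h.
rewrite /d; suff : - nrm (y - V x) <= sup E by lra.
by apply: h; exists x.
Qed.
Let approx n : exists x, nrm (y - V x) < d + (n.+1%:R)^-1.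
Proof.
have [e [x ->] he] := sup_adherent (inv_Sn_gt0 R n) hsE.
exists x; rewrite /d; move: he; set s := sup E; set t := (_ ^-1) => h; lra.
Qed.
Let xs := projT1 (choice approx).
Let xsP n : nrm (y - V (xs n)) < d + (n.+1%:R)^-1 := projT2 (choice approx) n.

Let paral a b : nrm (a - b) + nrm (a + b) = 2 * nrm a + 2 * nrm b.
Proof. rewrite nrmB nrmD; ring. Qed.

Let xs_cauchy m n : nrm (xs m - xs n) <= 2 * (m.+1%:R)^-1 + 2 * (n.+1%:R)^-1.
Proof.
have := paral (y - V (xs n)) (y - V (xs m)).
have -> : y - V (xs n) - (y - V (xs m)) = V (xs m - xs n).
  by rewrite VB opprB addrC addrA subrK addrC.
have -> : y - V (xs n) + (y - V (xs m)) = (2%:R : R[i]) *: (y - V ((2%:R : R[i])^-1 *: (xs n + xs m))).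
  rewrite VZ VD scalerBr scalerA mulfV ?c2_neq0 // scale1r scaler_nat mulr2n opprD !addrA.
  congr (_ - _); rewrite -!addrA; congr (_ + _); by rewrite addrC.
rewrite nrmZ nrmV cn2 => h.
have := d_le ((2%:R : R[i])^-1 *: (xs n + xs m)).
have := xsP n; have := xsP m.
set t1 := (m.+1%:R)^-1; set t2 := (n.+1%:R)^-1; set D := d.
move: h; set A := nrm (xs m - xs n); set B := nrm (y - V (_ *: _)); set Bn := nrm (y - V (xs n)); set Bm := nrm (y - V (xs m)); lra.
Qed.
Let xs_cauchy' : forall e : R, 0 < e -> exists N, forall m n, (N <= m)%N -> (N <= n)%N -> nrm (xs m - xs n) < e.
Proof.
move=> e e0; have [N hN] := small_inv (divr_gt0 e0 (ltr0n R 4)).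
exists N => m n hm hn; apply: le_lt_trans (xs_cauchy m n) _.
have := inv_Sn_mono R hm; have := inv_Sn_mono R hn.
set a := (m.+1%:R)^-1; set b := (n.+1%:R)^-1; set c := (N.+1%:R)^-1.
move: hN; rewrite -/c; lra.
Qed.

Let lim_ex := complete' xs_cauchy'.
Let l := projT1 (cid lim_ex).
Let lP : conv xs l := projT2 (cid lim_ex).

Let l_min : nrm (y - V l) <= d.
Proof.
apply: le_eps => e e0.
have [N hN] := small_inv e0.
have hc : conv (fun n => y - V (xs n)) (y - V l).
  move=> e' e'0; have [N' hN'] := (lP : conv xs l) e' e'0; exists N' => n hn.
  rewrite opprB addrC addrA subrK -VB nrmV -nrmN opprB; exact: hN'.
have := @conv_le _ _ _ _ 0 (d + e) N hc.
rewrite subr0; apply => n hn; rewrite subr0; apply: ltW.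
apply: lt_le_trans (xsP n) _; rewrite lerD2l.
apply: le_trans (inv_Sn_mono R hn) (ltW hN).
Qed.

Let orth h : ip (y - V l) (V h) = 0.
Proof.
set z := y - V l; set c := ip z (V h).
suff : cn c <= 0 by move=> hc; apply: cn_eq0; apply/le_anti; rewrite hc cn_ge0.
have nh := nrm_ge0 h.
set t := (nrm h + 1)^-1.
have t0 : 0 < t by rewrite invr_gt0; lra.
have tn : t * nrm h < 1.
  rewrite /t mulrC -ltr_pdivlMr ?invr_gt0 ?invrK; lra.
have := d_le (l - ((- t * Re c) +i* (- t * Im c)) *: h).
rewrite VB VZ opprB addrA -/z => h1.
have := le_trans l_min h1.
rewrite addrAC -/z nrmDZ' nrmV /cn /= -/c => h2.
have cc := cn_ge0 c; move: h2 cc; rewrite /cn.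
set p := Re c; set r := Im c; set nz := nrm z; set nhh := nrm h.
move=> h2 cc.
have h3 : 0 <= t * (p * p + r * r) * (t * nhh - 2).
  have -> : t * (p * p + r * r) * (t * nhh - 2) =
     (- t * p * (- t * p) + - t * r * (- t * r)) * nhh + 2 * (- t * p * p + - t * r * r) by ring.
  lra.
have h4 : t * nhh - 2 < 0 by lra.
have h5 : 0 <= t * (p * p + r * r) by apply: mulr_ge0; lra.
nra.
Qed.

Lemma adj_ex : exists w, forall h, ip w h = ip y (V h).
Proof.
exists l => h.
have e : y = (y - V l) + V l by rewrite subrK.
by rewrite [in RHS]e hipDl orth add0r hipV.
Qed.
End Proj.

Definition adj y : H := projT1 (cid (adj_ex y)).
Lemma adjP y h : ip (adj y) h = ip y (V h).
Proof. exact: (projT2 (cid (adj_ex y))). Qed.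
Lemma adj_lin a u v : adj (a *: u + v) = a *: adj u + adj v.
Proof.
apply: hip_ext => h; rewrite hipDl hipZl !adjP.
by rewrite hipDl hipZl.
Qed.
Lemma adj_nrm y : nrm (adj y) <= nrm y.
Proof.
have h := cauchy_schwarz y (V (adj y)).
rewrite -adjP hip_real cnR nrmV in h.
have n0 := nrm_ge0 (adj y); have n1 := nrm_ge0 y.
move: h n0 n1; set n := nrm (adj y); set m := nrm y => h n0 n1.
nra.
Qed.
End Isom.

End P3.
Import P3.

Module P4.
Local Open Scope ring_scope.
Local Open Scope complex_scope.
Set Implicit Arguments. Unset Strict Implicit. Unset Printing Implicit Defensive.
Local Notation Re := (@complex.Re _).
Local Notation Im := (@complex.Im _).
Local Notation "x ^c" := (@conjc _ x) (at level 1, format "x ^c").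

Section CnFacts.
Variable R : realType.
Implicit Types a b : R[i].
Lemma cnM a b : cn (a * b) = cn a * cn b.
Proof. rewrite /cn !cReM !cImM; ring. Qed.
Lemma cn1 : cn (1 : R[i]) = 1.
Proof. by rewrite /cn /=; ring. Qed.
Lemma cn1_mulJ a (h : cn a = 1) : a * a^c = 1.
Proof. apply: complexP; rewrite ?(cReM, cImM, cReJ, cImJ) /=; [rewrite -h /cn|]; ring. Qed.
Lemma cn1_Jmul a : cn a = 1 -> a^c * a = 1.
Proof. by move=> h; rewrite mulrC cn1_mulJ. Qed.
End CnFacts.

Section Model.
Variable R : realType.
Variable H : HilbertSpace R.
Variable L : Type.
Variable q : L -> L -> R[i].
Hypothesis hq : forall a b, a <> b -> cn (q a b) = 1.
Variable V : L -> H -> H.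
Hypothesis hV : forall a, lin_isometry (V a).
Hypothesis hVq : forall a b, a <> b -> forall x, V a (V b x) = q a b *: V b (V a x).
Local Notation ip := (@hip R H).
Local Notation nrm := (@nrm R H).

Definition F := seq L -> H.
Definition C1 (x : F) := forall u v a b, a <> b -> x (u ++ a :: b :: v) = q a b *: x (u ++ b :: a :: v).
Definition C2 (x : F) := forall w a h, ip (x w) h = ip (x (a :: w)) (V a h).
Definition C3 (x : F) := exists M, forall w, nrm (x w) <= M.
Definition inK (x : F) := [/\ C1 x, C2 x & C3 x].

Definition qq a b : R[i] := if pselect (b = a) then 1 else q a b.
Definition ph a (w : seq L) : R[i] := foldr (fun b acc => qq a b * acc) 1 w.
Lemma cn_qq a b : cn (qq a b) = 1.
Proof. rewrite /qq; case: pselect => [e|ne]; [exact: cn1 | exact: hq (nesym ne)]. Qed.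
Lemma cn_ph a w : cn (ph a w) = 1.
Proof. elim: w => [|b w IH] /=; first exact: cn1. by rewrite cnM cn_qq IH mulr1. Qed.

Lemma C1qq x : C1 x -> forall u v a b, x (u ++ a :: b :: v) = qq a b *: x (u ++ b :: a :: v).
Proof.
move=> h u v a b; rewrite /qq; case: (pselect (b = a)) => [e|ne].
  by rewrite scale1r; subst b.
exact: h (nesym ne).
Qed.

Lemma move_right x : C1 x -> forall w u a, x (u ++ a :: w) = ph a w *: x (u ++ w ++ [:: a]).
Proof.
move=> h; elim=> [|b w IH] u a /=; first by rewrite scale1r.
by rewrite C1qq // -cat_rcons IH cat_rcons scalerA.

Qed.

Lemma ip_scale_cn (p : R[i]) (X Y : H) : cn p = 1 -> ip (p *: X) (p *: Y) = ip X Y.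
Proof. by move=> h; rewrite hipZl hipZr mulrA cn1_mulJ // mul1r. Qed.

Lemma pair_move x y : C1 x -> C1 y -> forall w u a,
  ip (x (u ++ a :: w)) (y (u ++ a :: w)) = ip (x (u ++ w ++ [:: a])) (y (u ++ w ++ [:: a])).
Proof. by move=> hx hy w u a; rewrite move_right // (move_right hy) ip_scale_cn // cn_ph. Qed.

Lemma pair_rot x y : C1 x -> C1 y -> forall u v,
  ip (x (u ++ v)) (y (u ++ v)) = ip (x (v ++ u)) (y (v ++ u)).
Proof.
move=> hx hy; elim=> [|a u IH] v /=; first by rewrite cats0.
have := pair_move hx hy (u ++ v) [::] a; rewrite /= => ->.
by rewrite -catA IH -catA.
Qed.

Lemma nrm_rot x : C1 x -> forall u v, nrm (x (u ++ v)) = nrm (x (v ++ u)).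
Proof. by move=> hx u v; rewrite /P1.nrm pair_rot. Qed.

Lemma nrm_step x : C2 x -> forall w a, nrm (x w) <= nrm (x (a :: w)).
Proof.
move=> hx w a.
have h := cauchy_schwarz (x (a :: w)) (V a (x w)).
rewrite -hx hip_real cnR nrmV // in h.
have n0 := nrm_ge0 (x w); have n1 := nrm_ge0 (x (a :: w)).
move: h n0 n1; set n := nrm (x w); set m := nrm (x (a :: w)) => h n0 n1.
nra.
Qed.

Lemma nrm_mono x : C2 x -> forall u w, nrm (x w) <= nrm (x (u ++ w)).
Proof.
move=> hx; elim=> [|a u IH] w //=.
exact: le_trans (IH w) (nrm_step hx _ _).
Qed.

Lemma fD (x y : F) w : (x + y) w = x w + y w. Proof. by []. Qed.
Lemma fZ (a : R[i]) (x : F) w : (a *: x) w = a *: x w. Proof. by []. Qed.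
Lemma fN (x : F) w : (- x) w = - x w. Proof. by []. Qed.
Lemma fB (x y : F) w : (x - y) w = x w - y w. Proof. by []. Qed.
Lemma f0 w : (0 : F) w = 0. Proof. by []. Qed.

Lemma inK0 : inK 0.
Proof.
split.
- by move=> u v a b _; rewrite !f0 scaler0.
- by move=> w a h; rewrite !f0 !hip0l.
- by exists 0 => w; rewrite f0 nrm0.
Qed.

Lemma inK_lin (a : R[i]) x y : inK x -> inK y -> inK (a *: x + y).
Proof.
move=> [x1 x2 [Mx hMx]] [y1 y2 [My hMy]]; split.
- move=> u v b c ne; rewrite !fD !fZ x1 // y1 // scalerDr !scalerA mulrC.
  by [].
- by move=> w b h; rewrite !fD !fZ !hip_linear (x2 w b h) (y2 w b h).
- exists (2 * cn a * Mx + 2 * My) => w; rewrite fD fZ.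
  apply: le_trans (nrm_add_le _ _ ltr01) _; rewrite invr1 nrmZ.
  have := hMx w; have := hMy w; have := cn_ge0 a.
  set c := cn a; set nx := nrm (x w); set ny := nrm (y w) => c0 hy hx.
  nra.
Qed.
Lemma inKD x y : inK x -> inK y -> inK (x + y).
Proof. by move=> hx hy; rewrite -[x]scale1r; apply: inK_lin. Qed.
Lemma inKZ (a : R[i]) x : inK x -> inK (a *: x).
Proof. by move=> hx; rewrite -[_ *: _]addr0; apply: inK_lin => //; apply: inK0. Qed.
Lemma inKN x : inK x -> inK (- x).
Proof. by move=> hx; rewrite -scaleN1r; apply: inKZ. Qed.
Lemma inKB x y : inK x -> inK y -> inK (x - y).
Proof. by move=> hx hy; apply: inKD => //; apply: inKN. Qed.

Definition NK (x : F) : R := sup [set r | exists w, r = nrm (x w)].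
Lemma NK_hs x : inK x -> has_sup [set r | exists w, r = nrm (x w)].
Proof.
move=> [_ _ [M hM]]; split; first by exists (nrm (x [::])), [::].
by exists M => r [w ->].
Qed.
Lemma NK_ge x w : inK x -> nrm (x w) <= NK x.
Proof. by move=> hx; apply: (sup_upper_bound (NK_hs hx)); exists w. Qed.
Lemma NK_ge0 x : inK x -> 0 <= NK x.
Proof. by move=> hx; apply: le_trans (nrm_ge0 _) (NK_ge [::] hx). Qed.
Lemma NK_adh x e : inK x -> 0 < e -> exists w, NK x - e < nrm (x w).
Proof.
move=> hx e0; have [r [w ->] h] := sup_adherent e0 (NK_hs hx).
by exists w.
Qed.
Lemma NK_le x M : inK x -> (forall w, nrm (x w) <= M) -> NK x <= M.
Proof.
move=> hx hM; apply: ge_sup; first by exists (nrm (x [::])), [::].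
by move=> r [w ->].
Qed.

Definition good e w (x : F) := NK x - e < nrm (x w).

Lemma good_ex (s : seq F) : (forall z, List.In z s -> inK z) ->
  forall e, 0 < e -> exists w, forall z, List.In z s -> good e w z.
Proof.
elim: s => [|x s IH] hs e e0; first by exists [::].
have [w hw] := IH (fun z hz => hs z (or_intror hz)) e e0.
have hx := hs x (or_introl erefl).
have [w0 hw0] := NK_adh hx e0.
exists (w0 ++ w) => z [<-|hz].
- rewrite /good nrm_rot; last by case: hx.
  apply: lt_le_trans hw0 _; apply: nrm_mono; by case: hx.
- apply: lt_le_trans (hw z hz) _; apply: nrm_mono; by case: (hs z (or_intror hz)).
Qed.

Definition ci : R[i] := 0 +i* 1.
Definition pol4 (x y : F) := [:: x + y; x - y; x + ci *: y; x - ci *: y].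

Definition hipK (x y : F) : R[i] :=
  ((NK (x + y) - NK (x - y)) / 4) +i* ((NK (x + ci *: y) - NK (x - ci *: y)) / 4).

Lemma pol4_inK x y : inK x -> inK y -> forall z, List.In z (pol4 x y) -> inK z.
Proof.
move=> hx hy z /= [<-|[<-|[<-|[<-|[]]]]].
- exact: inKD. - exact: inKB. - by apply: inKD => //; apply: inKZ.
- by apply: inKB => //; apply: inKZ.
Qed.

Lemma Re_pol (X Y : H) : complex.Re (ip X Y) = (nrm (X + Y) - nrm (X - Y)) / 4.
Proof. rewrite nrmD nrmB; lra. Qed.
Lemma Im_pol (X Y : H) : complex.Im (ip X Y) = (nrm (X + ci *: Y) - nrm (X - ci *: Y)) / 4.
Proof. by rewrite -Re_pol hipZr cReM cReJ cImJ /=; ring. Qed.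

Definition close (e : R) (c d : R[i]) :=
  [/\ Re c - e <= Re d, Re d <= Re c + e, Im c - e <= Im d & Im d <= Im c + e].

Lemma close_hip x y e w : inK x -> inK y ->
  (forall z, List.In z (pol4 x y) -> good e w z) ->
  close e (hipK x y) (ip (x w) (y w)).
Proof.
move=> hx hy hg.
have hK := pol4_inK hx hy.
have g1 := hg _ (or_introl erefl).
have g2 := hg _ (or_intror (or_introl erefl)).
have g3 := hg _ (or_intror (or_intror (or_introl erefl))).
have g4 := hg _ (or_intror (or_intror (or_intror (or_introl erefl)))).
have k1 := NK_ge w (hK _ (or_introl erefl)).
have k2 := NK_ge w (hK _ (or_intror (or_introl erefl))).
have k3 := NK_ge w (hK _ (or_intror (or_intror (or_introl erefl)))).
have k4 := NK_ge w (hK _ (or_intror (or_intror (or_intror (or_introl erefl))))).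
move: g1 g2 g3 g4 k1 k2 k3 k4; rewrite /good /close /hipK /= Re_pol Im_pol.
rewrite ?fD ?fB ?fZ ?fN ?fZ.
set A := NK (x + y); set B := NK (x - y); set C := NK (x + ci *: y); set D := NK (x - ci *: y).
set a := nrm (x w + y w); set b := nrm (x w - y w); set c := nrm (x w + ci *: y w); set d := nrm (x w - ci *: y w).
move=> *; split; lra.
Qed.

Lemma small_le0 (D K : R) : 0 <= K -> (forall e, 0 < e -> D <= K * e) -> D <= 0.
Proof.
move=> K0 h; apply: le_eps => e e0; rewrite add0r.
have K1 : 0 < K + 1 by lra.
have := h (e / (K + 1)) (divr_gt0 e0 K1).
have : K * (e / (K + 1)) <= e.
  rewrite mulrA ler_pdivrMr //; nra.
lra.
Qed.
Lemma small_eq0 (D K : R) : 0 <= K -> (forall e, 0 < e -> -(K * e) <= D <= K * e) -> D = 0.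
Proof.
move=> K0 h; apply/le_anti/andP; split.
  by apply: (small_le0 K0) => e e0; case/andP: (h e e0).
rewrite -oppr_le0; apply: (small_le0 K0) => e e0; case/andP: (h e e0) => h1 _; lra.
Qed.
Lemma mul_bound (r t rho e : R) : -rho <= r -> r <= rho -> -e <= t -> t <= e ->
  -(rho * e) <= r * t <= rho * e.
Proof. move=> *; apply/andP; split; nra. Qed.

Lemma In_catl (A : Type) (s1 s2 : seq A) z : List.In z s1 -> List.In z (s1 ++ s2).
Proof. by move=> h; apply: List.in_or_app; left. Qed.
Lemma In_catr (A : Type) (s1 s2 : seq A) z : List.In z s2 -> List.In z (s1 ++ s2).
Proof. by move=> h; apply: List.in_or_app; right. Qed.

Lemma in_cat2 (A : Type) (P : A -> Prop) s1 s2 :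
  (forall z, List.In z s1 -> P z) -> (forall z, List.In z s2 -> P z) ->
  forall z, List.In z (s1 ++ s2) -> P z.
Proof. by move=> h1 h2 z hz; case: (List.in_app_or _ _ _ hz); [exact: h1 | exact: h2]. Qed.

Lemma in_cat3 (A : Type) (P : A -> Prop) s1 s2 s3 :
  (forall z, List.In z s1 -> P z) -> (forall z, List.In z s2 -> P z) ->
  (forall z, List.In z s3 -> P z) -> forall z, List.In z (s1 ++ s2 ++ s3) -> P z.
Proof.
move=> h1 h2 h3 z hz; case: (List.in_app_or _ _ _ hz); first exact: h1.
by move=> hz'; case: (List.in_app_or _ _ _ hz'); [exact: h2 | exact: h3].
Qed.

Lemma lin_arith (a Lc A B l al be : R[i]) e :
  close e Lc l -> close e A al -> close e B be -> l = a * al + be ->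
  let K := 2 + `|Re a| + `|Im a| in
  -(K * e) <= Re Lc - Re (a * A + B) <= K * e /\ -(K * e) <= Im Lc - Im (a * A + B) <= K * e.
Proof.
move=> [c1 c2 c3 c4] [d1 d2 d3 d4] [f1 f2 f3 f4] el K.
have ra1 := ler_norm (Re a); have ra2 : - `|Re a| <= Re a by rewrite lerNl -normrN ler_norm.
have ia1 := ler_norm (Im a); have ia2 : - `|Im a| <= Im a by rewrite lerNl -normrN ler_norm.
move: c1 c2 c3 c4; rewrite el !(cReD, cImD, cReM, cImM) => c1 c2 c3 c4.
rewrite ?(cReD, cImD, cReM, cImM).
have m1 := @mul_bound (Re a) (Re al - Re A) _ e ra2 ra1.
have m2 := @mul_bound (Im a) (Re al - Re A) _ e ia2 ia1.
have m3 := @mul_bound (Re a) (Im al - Im A) _ e ra2 ra1.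
have m4 := @mul_bound (Im a) (Im al - Im A) _ e ia2 ia1.
have e0 : 0 <= e by lra.
have n1 := normr_ge0 (Re a); have n2 := normr_ge0 (Im a).
rewrite /K; split; apply/andP; split.
all: move: m1 m2 m3 m4.
all: set ra := Re a; set ia := Im a; set RL := Re Lc; set IL := Im Lc; set RA := Re A; set IA := Im A.
all: set RB := Re B; set IB := Im B; set Ral := Re al; set Ial := Im al; set Rbe := Re be; set Ibe := Im be.
all: set nra' := `|ra|; set nia := `|ia|.
all: move=> m1 m2 m3 m4.
all: have {m1}/andP[m1 m1'] := m1 (ltac:(lra)) (ltac:(lra)).
all: have {m2}/andP[m2 m2'] := m2 (ltac:(lra)) (ltac:(lra)).
all: have {m3}/andP[m3 m3'] := m3 (ltac:(lra)) (ltac:(lra)).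
all: have {m4}/andP[m4 m4'] := m4 (ltac:(lra)) (ltac:(lra)).
all: have e1 : ra * (Ral - RA) = ra * Ral - ra * RA by ring.
all: have e2 : ia * (Ral - RA) = ia * Ral - ia * RA by ring.
all: have e3 : ra * (Ial - IA) = ra * Ial - ra * IA by ring.
all: have e4 : ia * (Ial - IA) = ia * Ial - ia * IA by ring.
all: have e5 : (2 + nra' + nia) * e = 2 * e + nra' * e + nia * e by ring.
all: lra.
Qed.

Lemma hipK_lin (a : R[i]) x y z : inK x -> inK y -> inK z ->
  hipK (a *: x + y) z = a * hipK x z + hipK y z.
Proof.
move=> hx hy hz.
have hl : inK (a *: x + y) by apply: inK_lin.
set K := 2 + `|Re a| + `|Im a|.
have K0 : 0 <= K by rewrite /K; have := normr_ge0 (Re a); have := normr_ge0 (Im a); lra.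
have main : forall e, 0 < e -> exists l al be,
    [/\ close e (hipK (a *: x + y) z) l, close e (hipK x z) al, close e (hipK y z) be
      & l = a * al + be].
  move=> e e0.
  have hs := in_cat3 (pol4_inK hl hz) (pol4_inK hx hz) (pol4_inK hy hz).
  have [w hw] := good_ex hs e0.
  exists (ip ((a *: x + y) w) (z w)), (ip (x w) (z w)), (ip (y w) (z w)); split.
  - by apply: close_hip => // u hu; apply: hw; apply: In_catl.
  - by apply: close_hip => // u hu; apply: hw; apply: In_catr; apply: In_catl.
  - by apply: close_hip => // u hu; apply: hw; apply: In_catr; apply: In_catr.
  - by rewrite fD fZ hip_linear.
apply: complexP; apply/eqP; rewrite -subr_eq0; apply/eqP; apply: (small_eq0 K0) => e e0.
- by have [l [al [be [c1 c2 c3 el]]]] := main e e0; case: (lin_arith c1 c2 c3 el).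
- by have [l [al [be [c1 c2 c3 el]]]] := main e e0; case: (lin_arith c1 c2 c3 el).
Qed.

Lemma hipK_conj x y : inK x -> inK y -> hipK x y = (hipK y x)^c.
Proof.
move=> hx hy.
have K0 : (0 : R) <= 2 by [].
have main : forall e, 0 < e -> exists w,
    close e (hipK x y) (ip (x w) (y w)) /\ close e (hipK y x) (ip (y w) (x w)).
  move=> e e0.
  have hs := in_cat2 (pol4_inK hx hy) (pol4_inK hy hx).
  have [w hw] := good_ex hs e0.
  exists w; split; apply: close_hip => // u hu; apply: hw; [apply: In_catl|apply: In_catr] => //.
apply: complexP; rewrite ?cReJ ?cImJ; apply/eqP; rewrite -subr_eq0; apply/eqP;
  apply: (small_eq0 K0) => e e0; have [w [[c1 c2 c3 c4] [d1 d2 d3 d4]]] := main e e0.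
- move: d1 d2; rewrite Re_hip_sym => d1 d2; apply/andP; split; lra.
- move: d3 d4; rewrite Im_hip_sym => d3 d4; apply/andP; split; lra.
Qed.

Lemma hipK_xx x : inK x -> hipK x x = (NK x)%:C.
Proof.
move=> hx.
have K0 : (0 : R) <= 2 by [].
have main : forall e, 0 < e -> exists w,
    close e (hipK x x) (ip (x w) (x w)) /\ good e w x /\ nrm (x w) <= NK x.
  move=> e e0.
  have hs : forall z, List.In z (pol4 x x ++ [:: x]) -> inK z.
    by apply: in_cat2; [exact: pol4_inK | move=> z [<-|[]]].
  have [w hw] := good_ex hs e0.
  exists w; split; first by apply: close_hip => // u hu; apply: hw; apply: In_catl.
  split; last exact: NK_ge.
  by apply: hw; apply: In_catr; left.
apply: complexP; apply/eqP; rewrite -subr_eq0; apply/eqP;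
  apply: (small_eq0 K0) => e e0; have [w [[c1 c2 c3 c4] [g n]]] := main e e0.
- move: c1 c2 g n; rewrite hip_real /good /= => c1 c2 g n; apply/andP; split; lra.
- move: c3 c4; rewrite hip_real /= => c3 c4; apply/andP; split; lra.
Qed.

Lemma NK_eq0 x : inK x -> NK x = 0 -> x = 0.
Proof.
move=> hx h; apply: funext => w; rewrite f0; apply: nrm_eq0.
by apply/le_anti; rewrite nrm_ge0 -h NK_ge.
Qed.

Lemma NK_eq x y : (forall w, nrm (x w) = nrm (y w)) -> NK x = NK y.
Proof.
move=> h; rewrite /NK; congr sup; apply: funext => r; apply: propext; split.
- by move=> [w ->]; exists w; rewrite h.
- by move=> [w ->]; exists w; rewrite h.
Qed.

Lemma cnD_le (c d : R[i]) : cn (c + d) <= 2 * cn c + 2 * cn d.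
Proof. rewrite /cn cReD cImD. set p := Re c; set r := Re d; set s := Im c; set t := Im d. have := sqr_ge0 (p - r); have := sqr_ge0 (s - t); rewrite !expr2; nra. Qed.
Lemma cnN (c : R[i]) : cn (- c) = cn c.
Proof. by rewrite /cn cReN cImN; ring. Qed.

Lemma conv_scale (s : nat -> H) l (p : R[i]) : conv s l -> cn p = 1 ->
  conv (fun n => p *: s n) (p *: l).
Proof.
move=> hs hp e e0; have [N hN] := hs e e0; exists N => n hn.
by rewrite -scalerBr nrmZ hp mul1r; apply: hN.
Qed.

Lemma nrm_le2 (a b : H) : nrm (a + b) <= 2 * nrm a + 2 * nrm b.
Proof. by have := nrm_add_le a b ltr01; rewrite invr1. Qed.

Lemma K_complete (u : nat -> F) : (forall n, inK (u n)) ->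
  (forall e, 0 < e -> exists N, forall m n, (N <= m)%N -> (N <= n)%N -> NK (u m - u n) < e) ->
  exists l, inK l /\ forall e, 0 < e -> exists N, forall n, (N <= n)%N -> NK (u n - l) < e.
Proof.
move=> hu hc.
have cw : forall w, exists l, conv (fun n => u n w) l.
  move=> w; apply: complete' => e e0; have [N hN] := hc e e0; exists N => m n hm hn.
  apply: le_lt_trans (hN m n hm hn); rewrite -fB; apply: NK_ge; exact: inKB.
pose l : F := fun w => projT1 (cid (cw w)).
have lP : forall w, conv (fun n => u n w) (l w) := fun w => projT2 (cid (cw w)).
have hl : inK l.
  split.
  - move=> u' v a b ne; apply: (conv_unique (lP _)).
    have -> : (fun n => u n (u' ++ a :: b :: v)) = (fun n => q a b *: u n (u' ++ b :: a :: v)).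
      by apply: funext => n; case: (hu n) => c1 _ _; apply: c1.
    exact: conv_scale (lP (u' ++ b :: a :: v)) (hq ne).
  - move=> w a h.
    set D := ip (l w) h - ip (l (a :: w)) (V a h).
    suff : cn D <= 0 by move=> hD; apply/eqP; rewrite -subr_eq0; apply/eqP; apply: cn_eq0;
      apply/le_anti; rewrite hD cn_ge0.
    have K0 : 0 <= 2 * nrm h + 2 * nrm (V a h).
      by apply: addr_ge0; apply: mulr_ge0 => //; apply: nrm_ge0.
    apply: (small_le0 K0) => e e0.
    have [N1 hN1] := lP w e e0; have [N2 hN2] := lP (a :: w) e e0.
    set n := maxn N1 N2.
    have h1 := hN1 n (leq_maxl _ _); have h2 := hN2 n (leq_maxr _ _).
    have eD : D = ip (l w - u n w) h - ip (l (a :: w) - u n (a :: w)) (V a h).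
      rewrite !hipBl; case: (hu n) => _ c2 _; rewrite -c2 /D; ring.
    rewrite eD; apply: le_trans (cnD_le _ _) _; rewrite cnN.
    have cs1 := cauchy_schwarz (l w - u n w) h.
    have cs2 := cauchy_schwarz (l (a :: w) - u n (a :: w)) (V a h).
    rewrite -nrmN opprB in cs1; rewrite -nrmN opprB in cs2.
    have g1 := nrm_ge0 h; have g2 := nrm_ge0 (V a h).
    move: cs1 cs2 h1 h2 g1 g2.
    set A := nrm (u n w - l w); set B := nrm (u n (a :: w) - l (a :: w)).
    set c1 := cn _; set c2 := cn _; set nh := nrm h; set nv := nrm (V a h).
    move=> cs1 cs2 h1 h2 g1 g2; nra.
  - have [N1 hN1] := hc 1 ltr01.
    exists (2 + 2 * NK (u N1)) => w.
    have hb : nrm (l w - u N1 w) <= 1.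
      apply: (conv_le (lP w) (N0 := N1)) => n hn; apply: ltW; apply: le_lt_trans (hN1 n N1 hn (leqnn _)).
      rewrite -fB; apply: NK_ge; exact: inKB.
    have := nrm_le2 (l w - u N1 w) (u N1 w); rewrite subrK.
    have := NK_ge w (hu N1); lra.
exists l; split => // e e0.
have e2 : 0 < e / 2 by rewrite divr_gt0.
have [N hN] := hc _ e2; exists N => n hn.
apply: le_lt_trans (_ : e / 2 < e); last by lra.
apply: NK_le; first by apply: inKB.
move=> w; rewrite fB -nrmN opprB.
apply: (conv_le (lP w) (N0 := N)) => m hm; apply: ltW.
apply: le_lt_trans (hN m n hm hn); rewrite -fB; apply: NK_ge; exact: inKB.
Qed.

End Model.

End P4.
Import P4.

Module P5.
Local Open Scope ring_scope.
Local Open Scope complex_scope.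
Set Implicit Arguments. Unset Strict Implicit. Unset Printing Implicit Defensive.
Local Notation Re := (@complex.Re _).
Local Notation Im := (@complex.Im _).
Local Notation "x ^c" := (@conjc _ x) (at level 1, format "x ^c").

Section Ops.
Variable R : realType.
Variable H : HilbertSpace R.
Variable L : Type.
Variable q : L -> L -> R[i].
Hypothesis hq : forall a b, a <> b -> cn (q a b) = 1.
Variable V : L -> H -> H.
Hypothesis hV : forall a, lin_isometry (V a).
Hypothesis hVq : forall a b, a <> b -> forall x, V a (V b x) = q a b *: V b (V a x).
Local Notation ip := (@hip R H).
Local Notation nrm := (@nrm R H).
Local Notation inK := (inK q V).
Local Notation F := (F H L).
Local Notation qq := (qq q).
Local Notation ph := (ph q).

Definition Uf a (x : F) : F := fun w => x (w ++ [:: a]).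

Lemma inK_U a x : inK x -> inK (Uf a x).
Proof.
move=> [c1 c2 [M hM]]; split.
- by move=> u v b c ne; rewrite /Uf -!catA /= c1.
- by move=> w b h; exact: (c2 (w ++ [:: a]) b h).
- by exists M => w; apply: hM.
Qed.

Lemma NK_U a x : inK x -> NK (Uf a x) = NK x.
Proof.
move=> hx; have hU := inK_U a hx.
apply/le_anti/andP; split.
  by apply: (NK_le hU) => w; apply: (NK_ge _ hx).
apply: (NK_le hx) => w; apply: le_trans (nrm_step hV (let: And3 _ c2 _ := hx in c2) w a) _.
have := nrm_rot hq (let: And3 c1 _ _ := hx in c1) [:: a] w; rewrite /= => ->.
exact: (NK_ge w hU).
Qed.

Lemma Uf_lin a (c : R[i]) x y : Uf a (c *: x + y) = c *: Uf a x + Uf a y.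
Proof. by []. Qed.

Lemma Uf_comm a b x : a <> b -> inK x -> Uf a (Uf b x) = q a b *: Uf b (Uf a x).
Proof.
move=> ne [c1 _ _]; apply: funext => w; rewrite /Uf fZ -!catA /=.
exact: (c1 w [::] a b ne).
Qed.

Fixpoint Vw (w : seq L) (h : H) : H := if w is b :: w' then V b (Vw w' h) else h.
Definition Jf (h : H) : F := fun w => Vw w h.

Lemma Vw_lin w (c : R[i]) h g : Vw w (c *: h + g) = c *: Vw w h + Vw w g.
Proof. by elim: w => [|b w IH] //=; rewrite IH (proj1 (hV b)). Qed.
Lemma Vw_scale w (c : R[i]) h : Vw w (c *: h) = c *: Vw w h.
Proof.
have := Vw_lin w c h 0; rewrite !addr0 => ->.
suff -> : Vw w 0 = 0 by rewrite addr0.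
by elim: w => [|b w IH] //=; rewrite IH V0.
Qed.
Lemma Vw_nrm w h : nrm (Vw w h) = nrm h.
Proof. by elim: w => [|b w IH] //=; rewrite nrmV. Qed.
Lemma Vw_cat w1 w2 h : Vw (w1 ++ w2) h = Vw w1 (Vw w2 h).
Proof. by elim: w1 => [|b w IH] //=; rewrite IH. Qed.

Lemma inK_J h : inK (Jf h).
Proof.
split.
- move=> u v a b ne; rewrite /Jf !Vw_cat /= hVq // Vw_scale. by [].
- by move=> w a g; rewrite /Jf /= hipV.
- by exists (nrm h) => w; rewrite /Jf Vw_nrm.
Qed.

Lemma NK_J h : NK (Jf h) = nrm h.
Proof.
apply/le_anti/andP; split.
  by apply: (NK_le (inK_J h)) => w; rewrite /Jf Vw_nrm.
by have := NK_ge [::] (inK_J h).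
Qed.

Lemma UJ a h : Uf a (Jf h) = Jf (V a h).
Proof. by apply: funext => w; rewrite /Uf /Jf Vw_cat. Qed.

Lemma Jf_lin (c : R[i]) h g : Jf (c *: h + g) = c *: Jf h + Jf g.
Proof. by apply: funext => w; rewrite /Jf Vw_lin. Qed.

Lemma cn_qq' a b : cn (qq a b) = 1. Proof. exact: cn_qq hq a b. Qed.
Lemma Vqq a b h : V a (V b h) = qq a b *: V b (V a h).
Proof.
rewrite /P4.qq; case: (pselect (b = a)) => [e|ne]; first by rewrite scale1r; subst b.
exact: hVq a b (nesym ne) h.
Qed.
Lemma qq_aa a : qq a a = 1.
Proof. by rewrite /P4.qq; case: pselect. Qed.
Lemma ph_cat a s1 s2 : ph a (s1 ++ s2) = ph a s1 * ph a s2.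
Proof. by elim: s1 => [|b s IH] /=; rewrite ?mul1r // IH mulrA. Qed.

Definition adjV a := adj (hV a).
Lemma adjV0 a : adjV a 0 = 0.
Proof. have := adj_lin (hV a) 1 0 0; rewrite !scale1r !addr0 => e. apply: (addrI (adj (hV a) 0)); rewrite addr0; exact: esym e. Qed.
Lemma adjVZ a c y : adjV a (c *: y) = c *: adjV a y.
Proof. by have := adj_lin (hV a) c y 0; rewrite !addr0 -/(adjV a 0) adjV0 addr0. Qed.

Definition pre a (y : F) : F := fun w => ph a w *: adjV a (y w).

Lemma inK_pre a y : inK y -> inK (pre a y).
Proof.
move=> [c1 c2 [M hM]]; split.
- move=> u v b c ne; rewrite /pre c1 // adjVZ !ph_cat /= scalerA scalerA.
  congr (_ *: _); ring.
- move=> w b h; rewrite /pre /= !hipZl !(adjP (hV a)) (c2 w b) (Vqq a b h) hipZr.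
  have := cn1_mulJ (cn_qq' a b); set t := qq a b; set p := ph a w; set X := ip _ _.
  move=> ht; transitivity (p * X * (t * t^c)); first by rewrite ht mulr1. ring.
- exists M => w; rewrite /pre nrmZ cn_ph ?mul1r; last exact: hq.
  exact: le_trans (adj_nrm (hV a) _) (hM w).
Qed.

Lemma U_pre a y : inK y -> Uf a (pre a y) = y.
Proof.
move=> [c1 c2 c3]; apply: funext => w; rewrite /Uf /pre ph_cat /= qq_aa !mulr1.
have hm := move_right c1 w [::] a; rewrite /= in hm.
have -> : y (w ++ [:: a]) = (ph a w)^c *: y (a :: w).
  by rewrite hm scalerA cn1_Jmul ?scale1r // cn_ph.
rewrite adjVZ scalerA cn1_mulJ ?scale1r ?cn_ph //.
apply: hip_ext => h; rewrite (adjP (hV a)); exact: (esym (c2 w a h)).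
Qed.
End Ops.

End P5.
Import P5.

Module P6.
Local Open Scope ring_scope.
Local Open Scope complex_scope.
Set Implicit Arguments. Unset Strict Implicit. Unset Printing Implicit Defensive.
Local Notation Re := (@complex.Re _).
Local Notation Im := (@complex.Im _).
Local Notation "x ^c" := (@conjc _ x) (at level 1, format "x ^c").

Section HS.
Variable R : realType.
Variable H : HilbertSpace R.
Variable L : Type.
Variable q : L -> L -> R[i].
Hypothesis hq : forall a b, a <> b -> cn (q a b) = 1.
Variable V : L -> H -> H.
Hypothesis hV : forall a, lin_isometry (V a).
Hypothesis hVq : forall a b, a <> b -> forall x, V a (V b x) = q a b *: V b (V a x).
Local Notation F := (F H L).

Definition Kpred : {pred F} := fun x => `[< inK q V x >].
Lemma Kpred_closed : submod_closed Kpred.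
Proof.
split; first by apply/asboolP; apply: inK0.
move=> a u v /asboolP hu /asboolP hv; apply/asboolP; exact: inK_lin.
Qed.
HB.instance Definition _ := GRing.isSubmodClosed.Build R[i] F Kpred Kpred_closed.

Inductive Kt : Type := KSub (x : F) of x \in Kpred.
Definition kval (k : Kt) : F := let: KSub x _ := k in x.
HB.instance Definition _ := [isSub for kval].
HB.instance Definition _ := [Choice of Kt by <:].
HB.instance Definition _ := [SubChoice_isSubZmodule of Kt by <:].
HB.instance Definition _ := [SubZmodule_isSubLmodule of Kt by <:].

Lemma kvalP (k : Kt) : inK q V (kval k).
Proof. by case: k => x /= /asboolP. Qed.
Lemma kvalD (x y : Kt) : kval (x + y) = kval x + kval y. Proof. by []. Qed.
Lemma kvalZ (a : R[i]) (x : Kt) : kval (a *: x) = a *: kval x. Proof. by []. Qed.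
Lemma kvalN (x : Kt) : kval (- x) = - kval x. Proof. by []. Qed.
Lemma kval0 : kval 0 = 0. Proof. by []. Qed.

Definition hipKt (x y : Kt) : R[i] := hipK (kval x) (kval y).

Lemma hipKt_linear (a : R[i]) (x y z : Kt) : hipKt (a *: x + y) z = a * hipKt x z + hipKt y z.
Proof. by rewrite /hipKt kvalD kvalZ (hipK_lin hq hV _ (kvalP x) (kvalP y) (kvalP z)). Qed.
Lemma hipKt_conj (x y : Kt) : hipKt x y = (hipKt y x)^c.
Proof. by rewrite /hipKt (hipK_conj hq hV (kvalP x) (kvalP y)). Qed.
Lemma hipKt_xx (x : Kt) : hipKt x x = (NK (kval x))%:C.
Proof. by rewrite /hipKt (hipK_xx hq hV (kvalP x)). Qed.
Lemma hipKt_ge0 (x : Kt) : 0 <= hipKt x x.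
Proof. by rewrite hipKt_xx lecR; apply: NK_ge0 (kvalP x). Qed.
Lemma hipKt_eq0 (x : Kt) : hipKt x x = 0 -> x = 0.
Proof.
rewrite hipKt_xx => /(congr1 (@complex.Re _)) /= h.
by apply: val_inj; rewrite /= (NK_eq0 (kvalP x) h).
Qed.
Lemma hipKt_complete (u : nat -> Kt) :
  (forall e : R, 0 < e -> exists N : nat, forall m n : nat,
      (N <= m)%N -> (N <= n)%N -> `|hipKt (u m - u n) (u m - u n)| < e%:C) ->
  exists l : Kt, forall e : R, 0 < e -> exists N : nat, forall n : nat,
      (N <= n)%N -> `|hipKt (u n - l) (u n - l)| < e%:C.
Proof.
move=> hc.
have hc' : forall e : R, 0 < e -> exists N, forall m n, (N <= m)%N -> (N <= n)%N ->
    NK (kval (u m) - kval (u n)) < e.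
  move=> e e0; have [N hN] := hc e e0; exists N => m n hm hn.
  have := hN m n hm hn; rewrite hipKt_xx abs_real_lt //.
  exact: NK_ge0 (kvalP _).
have [l [hl hlc]] := K_complete hq (fun n => kvalP (u n)) hc'.
have hlK : l \in Kpred by apply/asboolP.
exists (KSub hlK) => e e0; have [N hN] := hlc e e0; exists N => n hn.
rewrite hipKt_xx abs_real_lt; first exact: hN.
exact: NK_ge0 (kvalP _).
Qed.

Definition KH : HilbertSpace R := @Build_HilbertSpace R Kt hipKt hipKt_linear hipKt_conj
  hipKt_ge0 hipKt_eq0 hipKt_complete.

Lemma inKpred x : inK q V x -> x \in Kpred.
Proof. by move=> h; apply/asboolP. Qed.

Definition Ut a (k : Kt) : Kt := KSub (inKpred (inK_U a (kvalP k))).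
Definition Jt (h : H) : Kt := KSub (inKpred (inK_J hV hVq h)).

Lemma Ut_unitary a : @unitary_on R KH (Ut a).
Proof.
split; first split.
- by move=> c x y; apply: val_inj.
- move=> x; rewrite /= /hipKt /= (hipK_xx hq hV (inK_U a (kvalP x))) (hipK_xx hq hV (kvalP x)).
  by rewrite (NK_U hq hV a (kvalP x)).
- move=> y; exists (KSub (inKpred (inK_pre hq hV hVq a (kvalP y)))).
  by apply: val_inj; rewrite /= (U_pre hq hV a (kvalP y)).
Qed.

Lemma Jt_isometry : @lin_isometry R H KH Jt.
Proof.
split.
- by move=> c x y; apply: val_inj; rewrite /= Jf_lin.
- move=> x; rewrite /= /hipKt /= (hipK_xx hq hV (inK_J hV hVq x)) (NK_J hV hVq x).
  by rewrite hip_real.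
Qed.

Lemma Ut_comm a b : a <> b -> forall y : KH, Ut a (Ut b y) = q a b *: Ut b (Ut a y).
Proof.
move=> ne y; apply: val_inj; rewrite /= (Uf_comm ne (kvalP y)).
by [].
Qed.

Lemma UtJt a x : Ut a (Jt x) = Jt (V a x).
Proof. by apply: val_inj; rewrite /= UJ. Qed.
End HS.

Lemma norm1_cn (R : realType) (z : R[i]) : `|z| = 1 -> cn z = 1.
Proof.
rewrite normc_def => /(congr1 (@complex.Re _)) /= h.
have : (Num.sqrt (complex.Re z ^+ 2 + complex.Im z ^+ 2)) ^+ 2 = 1 by rewrite h expr1n.
by rewrite sqr_sqrtr ?addr_ge0 ?sqr_ge0 // /cn !expr2.
Qed.


End P6.
Import P6.

Import Order.TTheory GRing.Theory Num.Theory.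
Local Open Scope ring_scope.

Theorem corollary5p4 (R : realType) (H : HilbertSpace R) (Lambda : Type)
  (q : Lambda -> Lambda -> R[i])
  (hq_T : forall a b : Lambda, a <> b -> `|q a b| = 1)
  (hq_inv : forall a b : Lambda, a <> b -> q a b = (q b a)^-1)
  (V : Lambda -> H -> H)
  (hV : forall a : Lambda, isometry_on (V a))
  (hVq : forall a b : Lambda, a <> b ->
           forall x : H, V a (V b x) = q a b *: V b (V a x)) :
  exists (K : HilbertSpace R) (J : H -> K) (U : Lambda -> K -> K),
    lin_isometry J /\
    (forall a : Lambda, unitary_on (U a)) /\
    (forall a b : Lambda, a <> b ->
       forall y : K, U a (U b y) = q a b *: U b (U a y)) /\
    (forall (a : Lambda) (x : H), U a (J x) = J (V a x)).
Proof.
have hq : forall a b, a <> b -> cn (q a b) = 1 by move=> a b ne; apply: norm1_cn; exact: hq_T.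
exists (KH hq hV), (Jt hV hVq), (@Ut R H Lambda q V).
split; first exact: Jt_isometry.
split; first by move=> a; exact: Ut_unitary.
split; first by move=> a b ne y; exact: Ut_comm.
by move=> a x; exact: UtJt.
Qed.
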